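(* Let $w$ be a string of length $n$ over an arbitrary alphabet (letters compared only by equality) and let $i$ be a position of $w$ whose local period is internal, i.e. $i-\mu(i)\ge 1$ and $i+\mu(i)-1\le n$. Then $\mu(i)$ can be computed in $O(\mu(i))$ time and space.
   Context: For a position $i\in\{1,\dots,n\}$ of $w$, the local period $\mu(i)$ is the least positive integer $\mu$ such that $w[j]=w[j+\mu]$ for all $j$ with $\max\{1,i-\mu\}\le j$ and $j+\mu\le\min\{n,i+\mu-1\}$. *)

(* Defs.v *)
From mathcomp Require Import all_boot.
Set Implicit Arguments. Unset Strict Implicit. Unset Printing Implicit Defensive.

(** * Strings and local periods
    A string of length [n] over an alphabet [A] (an eqType: letters are only
    compared for equality) is given as [w : nat -> A]; its letters are
    [w 1, ..., w n] (1-based positions, values outside [1..n] are irrelevant). *)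

Definition lp_cond (A : eqType) (n : nat) (w : nat -> A) (i m : nat) : Prop :=
  forall j, maxn 1 (i - m) <= j -> j + m <= minn n (i + m - 1) -> w j = w (j + m).

Definition is_local_period (A : eqType) (n : nat) (w : nat -> A) (i mu : nat) : Prop :=
  [/\ 0 < mu, lp_cond n w i mu & forall m, 0 < m -> m < mu -> ~ lp_cond n w i m].

(** * Cost model: a simple RAM with a letter-equality oracle
    Registers r_0, r_1, ... and memory cells M[0], M[1], ... hold naturals
    (unit cost; only addition, truncated subtraction and comparison are
    available, no multiplication/division).  The input string is read-only and
    accessible only through equality queries between positions. *)
Inductive instr :=
| IConst of nat & nat
| IAdd   of nat & nat & nat
| ISub   of nat & nat & nat
| ILoad  of nat & nat
| IStore of nat & nat
| IEq    of nat & nat & nat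
| IJlt   of nat & nat & nat
| IJmp   of nat
| IHalt.

Record config := Config {
  pc : nat;
  reg : nat -> nat;
  mem : nat -> nat;
  space : nat   (* 1 + the largest memory address accessed so far (0 if none) *)
}.

Definition upd (f : nat -> nat) (a v : nat) : nat -> nat :=
  fun x => if x == a then v else f x.

Definition letter_oracle (A : eqType) (n : nat) (w : nat -> A) (a b : nat) : bool :=
  [&& 1 <= a <= n, 1 <= b <= n & w a == w b].

Definition step (P : seq instr) (q : nat -> nat -> bool) (c : config) : option config :=
  let r := reg c in
  let next := (pc c).+1 in
  match nth IHalt P (pc c) with
  | IConst d k => Some (Config next (upd r d k) (mem c) (space c))
  | IAdd d a b => Some (Config next (upd r d (r a + r b)) (mem c) (space c))
  | ISub d a b => Some (Config next (upd r d (r a - r b)) (mem c) (space c))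
  | ILoad d a => Some (Config next (upd r d (mem c (r a))) (mem c)
                              (maxn (space c) (r a).+1))
  | IStore a s => Some (Config next r (upd (mem c) (r a) (r s))
                               (maxn (space c) (r a).+1))
  | IEq d a b => Some (Config next (upd r d (nat_of_bool (q (r a) (r b)))) (mem c) (space c))
  | IJlt a b t => Some (Config (if r a < r b then t else next) r (mem c) (space c))
  | IJmp t => Some (Config t r (mem c) (space c))
  | IHalt => None
  end.

Definition halted (P : seq instr) (q : nat -> nat -> bool) (c : config) : bool :=
  if step P q c is None then true else false.

Fixpoint run (P : seq instr) (q : nat -> nat -> bool) (t : nat) (c : config) : config :=
  if t is t'.+1 then
    if step P q c is Some c' then run P q t' c' else c
  else c.

Definition init (n i : nat) : config :=
  Config 0 (upd (upd (fun _ => 0) 0 n) 1 i) (fun _ => 0) 0.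

(* Main.v *)
Require Import Defs.
From mathcomp Require Import all_boot zify.
Set Implicit Arguments. Unset Strict Implicit. Unset Printing Implicit Defensive.

Section KMP.
Variable R : nat -> nat -> bool.
Hypothesis Rsym : forall x y, R x y -> R y x.
Hypothesis Rtr : forall x y z, R x y -> R y z -> R x z.

Definition isb (m b : nat) : Prop := forall t, t < b -> R t (m - b + t).
Definition fspec (x v : nat) : Prop :=
  [/\ v < x, isb x v & forall b, v < b < x -> ~ isb x b].
Definition Winv (j c : nat) : Prop :=
  [/\ c < j, isb j c & forall b, c < b < j -> isb j b -> R b j = false].

Lemma isb0 m : isb m 0. Proof. by move=> t. Qed.

Lemma isb_trans m b c : c <= b <= m -> isb m b -> isb b c -> isb m c.
Proof.
move=> /andP[cb bm] Hb Hc t tc.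
have h1 := Hc t tc.
have h2 : R (b - c + t) (m - b + (b - c + t)) by apply: Hb; lia.
have -> : m - c + t = m - b + (b - c + t) by lia.
exact: Rtr h1 h2.
Qed.

Lemma isb_sub m b c : c < b <= m -> isb m b -> isb m c -> isb b c.
Proof.
move=> /andP[cb bm] Hb Hc t tc.
have h1 := Hc t tc.
have h2 : R (b - c + t) (m - b + (b - c + t)) by apply: Hb; lia.
have e : m - b + (b - c + t) = m - c + t by lia.
rewrite e in h2.
exact: Rtr h1 (Rsym h2).
Qed.

Lemma isb_ext m b : b < m -> isb m b -> R b m -> isb m.+1 b.+1.
Proof.
move=> bm Hb Rbm t; rewrite ltnS leq_eqVlt => /orP[/eqP->|tb].
  by have -> : m.+1 - b.+1 + b = m by lia.
have -> : m.+1 - b.+1 + t = m - b + t by lia.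
exact: Hb.
Qed.

Lemma isb_ext_inv m b : b <= m -> isb m.+1 b.+1 -> isb m b /\ R b m.
Proof.
move=> bm H; split.
  move=> t tb; have := H t (leq_trans tb (leqnSn _)).
  by have -> : m.+1 - b.+1 + t = m - b + t by lia.
have := H b (leqnn _); by have -> : m.+1 - b.+1 + b = m by lia.
Qed.

Lemma fspec1 : fspec 1 0.
Proof. split; [done | exact: isb0 | move=> b; lia]. Qed.

Lemma Winv_init j c : fspec j c -> Winv j c.
Proof. case=> h1 h2 h3; split => // b hb Hb; by case: (h3 b hb). Qed.

Lemma Winv_step j c c' : 0 < c -> Winv j c -> R c j = false -> fspec c c' -> Winv j c'.
Proof.
move=> c0 [cj Hc Hno] Rcj [c'c Hc' Hmax]; split.
- lia.
- apply: isb_trans Hc Hc'; lia.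
- move=> b /andP[h1 h2] Hb.
  case: (ltngtP b c) => [bc|cb|->] //.
  + exfalso; apply: (Hmax b); first lia. apply: isb_sub Hc Hb; lia.
  + apply: Hno => //; lia.
Qed.

Lemma Winv_match j c : Winv j c -> R c j -> fspec j.+1 c.+1.
Proof.
move=> [cj Hc Hno] Rcj; split.
- lia.
- exact: isb_ext.
- move=> b' /andP[h1 h2] Hb'.
  case: b' h1 h2 Hb' => [|b] //= h1 h2 Hb'.
  have [Hb Rb] := isb_ext_inv (ltnW (h2 : b < j)) Hb'.
  by rewrite Hno in Rb => //; lia.
Qed.

Lemma Winv_nomatch j : Winv j 0 -> R 0 j = false -> fspec j.+1 0.
Proof.
move=> [cj Hc Hno] R0j; split; [done | exact: isb0 | ].
move=> b' /andP[h1 h2] Hb'.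
case: b' h1 h2 Hb' => [|b] //= h1 h2 Hb'.
have [Hb Rb] := isb_ext_inv (ltnW (h2 : b < j)) Hb'.
clear Hb'; move: h1 h2 Hb Rb; case: b => [|b] h1 h2 Hb Rb; first by rewrite R0j in Rb.
by rewrite Hno in Rb => //; lia.
Qed.

End KMP.
Definition Prog : seq instr := [::
 (*0*) IConst 9 1;
 (*1*) IConst 2 1;
 (*2*) IAdd 3 2 2;
 (*3*) IStore 9 10;
 (*4*) IConst 5 0;
 (*5*) IConst 4 1;
 (*6*) IJlt 4 3 8;
 (*7*) IJmp 24;
 (*8*) IAdd 6 1 5;
 (*9*) IJlt 5 2 11;
 (*10*) ISub 6 6 3;
 (*11*) IAdd 7 1 4;
 (*12*) IJlt 4 2 14;
 (*13*) ISub 7 7 3;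
 (*14*) IEq 8 6 7;
 (*15*) IJlt 10 8 20;
 (*16*) IJlt 10 5 18;
 (*17*) IJmp 21;
 (*18*) ILoad 5 5;
 (*19*) IJmp 8;
 (*20*) IAdd 5 5 9;
 (*21*) IAdd 4 4 9;
 (*22*) IStore 4 5;
 (*23*) IJmp 6;
 (*24*) ILoad 11 3;
 (*25*) ILoad 12 11;
 (*26*) IJlt 10 12 28;
 (*27*) IJmp 30;
 (*28*) IAdd 11 12 10;
 (*29*) IJmp 25;
 (*30*) IJlt 10 11 32;
 (*31*) IJmp 35;
 (*32*) IJlt 2 11 35;
 (*33*) IAdd 0 11 10;
 (*34*) IHalt;
 (*35*) IAdd 2 2 2;
 (*36*) IJmp 2 ].

Section Run.
Variable q : nat -> nat -> bool.

Definition reaches (c : config) (Q : nat -> config -> Prop) :=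
  exists t, Q t (run Prog q t c).

Lemma run_add a b c : run Prog q (a + b) c = run Prog q b (run Prog q a c).
Proof.
elim: a c => [|a IH] c //=.
rewrite /=.
case E: (step Prog q c) => [c'|] //.
by case: (b) => //= ; rewrite E.
Qed.

Lemma reaches_step c Q :
  (if step Prog q c is Some c' then reaches c' (fun t => Q t.+1) else False) ->
  reaches c Q.
Proof.
case E: (step Prog q c) => [c'|] // [t Ht]; exists t.+1 => /=; by rewrite E.
Qed.

Lemma reaches_now c (Q : nat -> config -> Prop) : Q 0 c -> reaches c Q.
Proof. by exists 0. Qed.

Lemma reaches_seq c Q1 Q2 :
  reaches c Q1 -> (forall t1 c1, Q1 t1 c1 -> reaches c1 (fun t2 => Q2 (t1 + t2))) ->
  reaches c Q2.
Proof.
move=> [t1 H1] H; have [t2 H2] := H _ _ H1; exists (t1 + t2); by rewrite run_add.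
Qed.

Lemma reaches_weak c (Q1 Q2 : nat -> config -> Prop) :
  (forall t c, Q1 t c -> Q2 t c) -> reaches c Q1 -> reaches c Q2.
Proof. by move=> H [t Ht]; exists t; apply: H. Qed.

End Run.

Lemma updE f a v x : upd f a v x = if x == a then v else f x.
Proof. by []. Qed.

Ltac stp := apply: reaches_step; rewrite /step /= ?updE /=.


Section Str.
Variables (A : eqType) (n : nat) (w : nat -> A) (i : nat).
Definition q := letter_oracle n w.

Lemma q_sym x y : q x y -> q y x.
Proof.
rewrite /q /letter_oracle => /and3P[a b /eqP c].
by rewrite a b c eqxx.
Qed.
Lemma q_tr x y z : q x y -> q y z -> q x z.
Proof.
rewrite /q /letter_oracle => /and3P[a b /eqP c] /and3P[d e /eqP f].
by rewrite a e c f eqxx.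
Qed.

Definition pos k x := if x < k then i + x else i + x - (k + k).
Definition R k x y := q (pos k x) (pos k y).
Lemma R_sym k x y : R k x y -> R k y x. Proof. exact: q_sym. Qed.
Lemma R_tr k x y z : R k x y -> R k y z -> R k x z. Proof. exact: q_tr. Qed.

Record RegInv k (r : nat -> nat) : Prop :=
  { ri1 : r 1 = i; ri2 : r 2 = k; ri3 : r 3 = k + k; ri9 : r 9 = 1; ri10 : r 10 = 0 }.

Lemma RegInv_upd k r x v : x \notin [:: 1; 2; 3; 9; 10] -> RegInv k r -> RegInv k (upd r x v).
Proof.
move=> hx [h1 h2 h3 h9 h10]; split; rewrite updE;
  case: eqP => // E; by move: hx; rewrite -E.
Qed.

Definition MI k j (m : nat -> nat) := m 0 = 0 /\ forall x, 0 < x <= j -> fspec (R k) x (m x).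

Ltac rwregs := repeat match goal with H : ?r ?x = _ |- context [?r ?x] => rewrite H end.

Lemma cmp_ok k c j r m s : RegInv k r -> r 4 = j -> r 5 = c ->
  reaches q (Config 8 r m s) (fun t cf => [/\ t <= 7, pc cf = 15, Defs.mem cf = m, space cf = s &
     [/\ RegInv k (reg cf), reg cf 4 = j, reg cf 5 = c & reg cf 8 = R k c j]]).
Proof.
move=> RI e4 e5; have [e1 e2 e3 e9 e10] := RI.
stp; rwregs. stp; rwregs. case: ifP => h1.
- stp; rwregs. stp; rwregs. case: ifP => h2.
  + stp; rwregs. apply: reaches_now; split => //; split.
    * by do 3 apply: RegInv_upd => //.
    * by rewrite /= ?updE /=.
    * by rewrite /= ?updE /=.
    * by rewrite /= ?updE /= /R /pos h1 h2.
  + stp; rwregs. stp; rwregs. apply: reaches_now; split => //; split.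
    * by do 4 apply: RegInv_upd => //.
    * by rewrite /= ?updE /=.
    * by rewrite /= ?updE /=.
    * by rewrite /= ?updE /= /R /pos h1 h2.
- stp; rwregs. stp; rwregs. stp; rwregs. case: ifP => h2.
  + stp; rwregs. apply: reaches_now; split => //; split.
    * by do 4 apply: RegInv_upd => //.
    * by rewrite /= ?updE /=.
    * by rewrite /= ?updE /=.
    * by rewrite /= ?updE /= /R /pos h1 h2.
  + stp; rwregs. stp; rwregs. apply: reaches_now; split => //; split.
    * by do 5 apply: RegInv_upd => //.
    * by rewrite /= ?updE /=.
    * by rewrite /= ?updE /=.
    * by rewrite /= ?updE /= /R /pos h1 h2.
Qed.

Lemma MI_upd k j m v : MI k j m -> fspec (R k) j.+1 v -> MI k j.+1 (upd m j.+1 v).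
Proof.
move=> [m0 Hm] Hv; split; first by rewrite updE.
move=> x /andP[x0 xj]; rewrite updE; case: eqP => [->|ne] //.
apply: Hm; rewrite x0 /=; rewrite leq_eqVlt ltnS in xj; case/orP: xj => // /eqP; done.
Qed.

Definition WQ k j c := fun t cf => exists c',
  [/\ t + 11*c' <= 24 + 11*c, pc cf = 6, RegInv k (reg cf), reg cf 4 = j.+1 &
      [/\ reg cf 5 = c', fspec (R k) j.+1 c', MI k j.+1 (Defs.mem cf) & space cf <= k+k+1]].

Lemma while_ok k j : 0 < j < k+k -> forall c r m s, RegInv k r -> r 4 = j -> r 5 = c ->
  Winv (R k) j c -> MI k j m -> s <= k+k+1 -> reaches q (Config 8 r m s) (WQ k j c).
Proof.
move=> /andP[hj0 hjk] c; elim/ltn_ind: c => c IH r m s RI e4 e5 W Mi hs.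
apply: reaches_seq; first exact: (cmp_ok m s RI e4 e5).
move=> t1 [pc' r' m' s'] /= [ht1 -> -> -> [RI' e4' e5' e8]].
have [e1 e2 e3 e9 e10] := RI'.
stp; rwregs. case: ifP => hR.
-
  have Rt : R k c j by case: (R k c j) hR.
  have F := Winv_match W Rt.
  stp; rwregs. stp; rwregs. stp; rwregs. stp; rwregs.
  apply: reaches_now; exists c.+1; split.
  + lia.
  + done.
  + by do 2 apply: RegInv_upd => //.
  + by rewrite /= ?updE /= addn1.
  + split.
    * by rewrite /= ?updE /= addn1.
    * done.
    * by rewrite !addn1; apply: MI_upd.
    * rewrite /=; lia.
- have Rf : R k c j = false by case: (R k c j) hR.
  stp; rwregs. case: ifP => hc.
  + (* c > 0, go back *)
    stp; rwregs. stp; rwregs.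
    have [m0 Hm] := Mi.
    have Fc : fspec (R k) c (m c) by apply: Hm; case: W => cj _ _; lia.
    have W' := Winv_step (@R_sym k) (@R_tr k) hc W Rf Fc.
    have lt : m c < c by case: Fc.
    apply: reaches_weak; last first.
      apply: (IH (m c) lt) => //.
      case: W => cj _ _; lia.
    move=> t2 cf [c' [h1 h2 h3 h4 h5]]; exists c'; split => //; lia.
  + have c0 : c = 0 by lia.
    rewrite c0 in W Rf.
    have F := Winv_nomatch W Rf.
    stp; rwregs. stp; rwregs. stp; rwregs. stp; rwregs.
    apply: reaches_now; exists 0; split.
    * lia.
    * done.
    * by do 1 apply: RegInv_upd => //.
    * by rewrite /= ?updE /= addn1.
    * split.
      -- by rewrite /= ?updE /= e5' c0.
      -- done.
      -- by rewrite /= !addn1 c0; apply: MI_upd.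
      -- rewrite /=; lia.
Qed.

Definition JQ k d c := fun t cf =>
  [/\ t <= 26*d + 11*c + 2, pc cf = 24, RegInv k (reg cf), MI k (k+k) (Defs.mem cf) & space cf <= k+k+1].

Lemma jloop_ok k d : forall j c r m s, j + d = k+k -> 0 < j -> RegInv k r -> r 4 = j -> r 5 = c ->
  fspec (R k) j c -> MI k j m -> s <= k+k+1 -> reaches q (Config 6 r m s) (JQ k d c).
Proof.
elim: d => [|d IH] j c r m s hjd hj RI e4 e5 F Mi hs.
- have [e1 e2 e3 e9 e10] := RI.
  rewrite addn0 in hjd.
  stp; rwregs. rewrite hjd ltnn. stp.
  apply: reaches_now; split => //; first lia. by rewrite -hjd.
- have [e1 e2 e3 e9 e10] := RI.
  stp; rwregs. have -> : j < k + k by lia.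
  apply: reaches_seq.
    apply: (while_ok (j := j) _ RI e4 e5 (Winv_init F) Mi hs); apply/andP; split; lia.
  move=> t1 [pc' r' m' s'] [c' [h1 /= -> RI' e4' [e5' F' Mi' hs']]].
  apply: reaches_weak; last first.
    by apply: (IH j.+1 c' r' m' s') => //; lia.
  move=> t2 cf [h2 h3 h4 h5 h6]; split => //; lia.
Qed.

Definition CQ k b m := fun t cf => exists b',
  [/\ t <= 4*b + 3, pc cf = 30, RegInv k (reg cf), reg cf 11 = b' &
   [/\ isb (R k) (k+k) b', forall c, 0 < c < k+k -> isb (R k) (k+k) c -> 0 < b' <= c,
       b' < k+k, space cf <= k+k+1 & Defs.mem cf = m]].

Lemma chain_ok k b : forall r m s, RegInv k r -> r 11 = b -> b < k+k -> isb (R k) (k+k) b ->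
  (b = 0 -> forall c, 0 < c < k+k -> ~ isb (R k) (k+k) c) -> MI k (k+k) m -> s <= k+k+1 ->
  reaches q (Config 25 r m s) (CQ k b m).
Proof.
elim/ltn_ind: b => b IH r m s RI e11 hb Hb H0 Mi hs.
have [e1 e2 e3 e9 e10] := RI.
have [m0 Hm] := Mi.
stp; rwregs. stp; rwregs. case: ifP => hmb.
- have b0 : 0 < b by case: (posnP b) hmb => [->|//]; rewrite m0.
  have F : fspec (R k) b (m b) by apply: Hm; lia.
  have lt : m b < b by case: F.
  stp; rwregs. stp; rwregs.
  apply: reaches_weak; last first.
    apply: (IH (m b) lt) => //.
    - by rewrite /= ?updE /= addn0.
    - lia.
    - case: F => _ Hmb _; apply: (isb_trans (@R_tr k) _ Hb Hmb); lia.
    - lia.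
    - rewrite /=; lia.
  move=> t2 cf [b' [h1 h2 h3 h4 h5]]; exists b'; split => //; lia.
- have mb0 : m b = 0 by case: (m b) hmb.
  stp. apply: reaches_now; exists b; split.
  + lia.
  + done.
  + by apply: RegInv_upd.
  + by rewrite /= ?updE /=.
  + split => //.
    * move=> c hc Hc.
      case: (posnP b) => [bz|bp].
        by exfalso; apply: (H0 bz c hc Hc).
      apply/andP; split => //.
      case: (leqP b c) => // cb.
      have F : fspec (R k) b (m b) by apply: Hm; lia.
      rewrite mb0 in F; case: F => _ _ Hno.
      exfalso; apply: (Hno c); first lia.
      apply: (isb_sub (@R_sym k) (@R_tr k) _ Hb Hc); lia.
    * rewrite /=; lia.
Qed.

Section Mu.
Variable mu : nat.
Hypothesis Hmu : is_local_period n w i mu.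
Hypothesis Hi1 : 1 <= i - mu.
Hypothesis Hi2 : i + mu - 1 <= n.

Lemma good_border k : mu <= k -> isb (R k) (k+k) mu.
Proof.
move=> hk t ht.
have [mu0 Hc _] := Hmu.
rewrite /R /pos.
have -> : (t < k) = true by apply/idP; lia.
have -> : (k + k - mu + t < k) = false by apply/negbTE; rewrite -leqNgt; lia.
have -> : i + (k + k - mu + t) - (k + k) = i + t - mu by lia.
have E : w (i + t - mu) = w (i + t - mu + mu) by apply: Hc; lia.
rewrite (_ : i + t - mu + mu = i + t) in E; last lia.
rewrite /q /letter_oracle E eqxx andbT.
apply/andP; split; apply/andP; split; lia.
Qed.

Lemma border_good k b : 0 < b <= k -> b <= mu -> isb (R k) (k+k) b -> lp_cond n w i b.
Proof.
move=> /andP[b0 bk] bmu Hb j h1 h2.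
have := Hb (j + b - i) ltac:(lia).
rewrite /R /pos.
have -> : (j + b - i < k) = true by apply/idP; lia.
have -> : (k + k - b + (j + b - i) < k) = false by apply/negbTE; rewrite -leqNgt; lia.
have -> : i + (k + k - b + (j + b - i)) - (k + k) = j by lia.
have -> : i + (j + b - i) = j + b by lia.
by rewrite /q /letter_oracle => /and3P[_ _ /eqP ->].
Qed.

Definition FQ k := fun t cf =>
  [/\ halted Prog q cf, reg cf 0 = mu, t <= 70 * (4 * mu - k) & space cf <= 4 * mu].

Lemma round_ok d : forall k r m s, 2 * mu <= k + d -> k < 2 * mu -> 0 < k ->
  r 1 = i -> r 2 = k -> r 9 = 1 -> r 10 = 0 -> m 0 = 0 -> s <= k + k + 1 ->
  reaches q (Config 2 r m s) (FQ k).
Proof.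
have [mu0 Hgood Hmin] := Hmu.
elim: d => [|d IH] k r m s hd hk k0 e1 e2 e9 e10 m0 hs; first lia.
stp; rwregs. stp; rwregs. stp; rwregs. stp; rwregs.
set r1 := upd _ 4 1.
set m1 := upd m 1 0.
have RI : RegInv k r1 by rewrite /r1; split; rewrite /= ?updE /=.
have Mi : MI k 1 m1.
  split; first by rewrite /m1 updE.
  move=> x hx; have -> : x = 1 by lia.
  rewrite /m1 updE eqxx; exact: fspec1.
apply: reaches_seq.
  apply: (jloop_ok (d := k + k - 1) (j := 1) (c := 0) _ _ RI) => //; try lia.
  exact: fspec1.
move=> t1 [pc' r' m' s'] [ht1 /= -> RI' Mi' hs'].
have [e1' e2' e3' e9' e10'] := RI'.
have [m0' Hm'] := Mi'.
stp; rwregs.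
have F : fspec (R k) (k+k) (m' (k+k)) by apply: Hm'; lia.
case: F => Fb FH Fmax.
apply: reaches_seq.
  apply: (chain_ok (k := k) (b := m' (k+k))) => //.

  - move=> H0 c hc; apply: Fmax; rewrite H0; done.
  - rewrite /=; lia.
move=> t2 [pc2 r2 m2 s2] [b' [ht2 /= -> RI2 e11 [Hb' Hshort hb' hs2 /= ->]]].
have [f1 f2 f3 f9 f10] := RI2.
stp; rwregs.
case: ifP => hb0.
- stp; rwregs. case: ifP => hbk.
  + (* k < b' : continue *)
    have lt : k < mu.
      case: (ltnP k mu) => // hmk.
      have := Hshort mu ltac:(lia) (good_border hmk); lia.
    stp; rwregs. stp; rwregs.
    apply: reaches_weak; last first.
      apply: (IH (k + k)) => //; try lia.
      all: try by rewrite /= ?updE.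
    move=> t3 cf [h1 h2 h3 h4]; split => //; lia.
  + (* 0 < b' <= k : halt *)
    have bmu : b' = mu.
      case: (ltngtP b' mu) => [lt|gt|//].
      * exfalso; apply: (Hmin b') => //.
        apply: (border_good (k := k)) => //; [apply/andP; split; lia | lia].
      * have hmk : mu <= k by lia.
        have := Hshort mu ltac:(lia) (good_border hmk); lia.
    stp; rwregs.
    apply: reaches_now; split.
    * by [].
    * by rewrite /= ?updE /= addn0.
    * lia.
    * rewrite /=; lia.
- (* b' = 0 : continue *)
  have lt : k < mu.
    case: (ltnP k mu) => // hmk.
    have := Hshort mu ltac:(lia) (good_border hmk); lia.
  stp; rwregs. stp; rwregs. stp; rwregs.
  apply: reaches_weak; last first.
    apply: (IH (k + k)) => //; try lia.
    all: try by rewrite /= ?updE.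
  move=> t3 cf [h1 h2 h3 h4]; split => //; lia.
Qed.

End Mu.

End Str.

Theorem lemma6 :
  exists (P : seq instr) (C : nat),
    forall (A : eqType) (n : nat) (w : nat -> A) (i mu : nat),
      1 <= i <= n ->
      is_local_period n w i mu ->
      1 <= i - mu ->
      i + mu - 1 <= n ->
      exists t : nat,
        let c := run P (letter_oracle n w) t (init n i) in
        [/\ halted P (letter_oracle n w) c,
            reg c 0 = mu,
            t <= C * mu &
            space c <= C * mu].
Proof.
exists Prog, 300 => A n w i mu hi Hmu Hi1 Hi2.
have mu0 : 0 < mu by case: Hmu.
have H : reaches (q n w) (init n i) (fun t c =>
   [/\ halted Prog (q n w) c, reg c 0 = mu, t <= 300 * mu & space c <= 300 * mu]).
  rewrite /init. stp. stp.
  apply: reaches_weak; last first.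
    apply: (round_ok Hmu Hi1 Hi2 (d := 2 * mu) (k := 1)); rewrite /= ?updE /=; try lia.
  move=> t c [h1 h2 h3 h4]; split => //; lia.
exact: H.
Qed.
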